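(* Let $\Gamma_0$ be a normal system with entropy $S$, and let $\Gamma$ be a further state space such that $\prec$ is defined on $\Gamma$, on $\Gamma\times\Gamma_0$ and on multiple products of these spaces, satisfying (A1), (A2), (A3), (A6) and the cancellation law (comparability (B2) is NOT assumed). Fix reference states $Z_0\in\Gamma_0$, $X_1\in\Gamma$ and assume (B1): for every $X\in\Gamma$ there exist $Z',Z''\in\Gamma_0$ with $(X_1,Z')\prec(X,Z_0)\prec(X_1,Z'')$. For $X\in\Gamma$ define $$S_-(X)=\sup\{S(Z')\,:\,Z'\in\Gamma_0,\ (X_1,Z')\prec(X,Z_0)\},\qquad S_+(X)=\inf\{S(Z'')\,:\,Z''\in\Gamma_0,\ (X,Z_0)\prec(X_1,Z'')\}.$$ Then: (1) For $X,Y\in\Gamma$, $X\prec Y$ implies $S_-(X)\le S_-(Y)$ and $S_+(X)\le S_+(Y)$. (2) For $X,Y\in\Gamma$, if $S_+(X)\le S_-(Y)$ then $X\prec Y$. (3) Define $S_\pm$ on $\Gamma\times\Gamma$ analogously, using $\Gamma_0\times\Gamma_0$ (with entropy $S(Z,W)=S(Z)+S(W)$) as entropy meter and $(X_1,X_1)\in\Gamma\times\Gamma$, $(Z_0,Z_0)\in\Gamma_0\times\Gamma_0$ as reference points, i.e. $S_-(X,Y)=\sup\{S(Z')+S(W')\,:\,(X_1,X_1,Z',W')\prec(X,Y,Z_0,Z_0)\}$ and $S_+(X,Y)=\inf\{S(Z'')+S(W'')\,:\,(X,Y,Z_0,Z_0)\prec(X_1,X_1,Z'',W'')\}$. Then for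 all $X,Y\in\Gamma$, $$S_-(X)+S_-(Y)\le S_-(X,Y)\le S_+(X,Y)\le S_+(X)+S_+(Y).$$ (4) Define $S_\pm$ on $\Gamma\times\Gamma_0$ analogously, using $\Gamma_0$ as entropy meter and $(X_1,Z_0)\in\Gamma\times\Gamma_0$, $Z_0\in\Gamma_0$ as reference points, i.e. $S_-(X,Z)=\sup\{S(Z')\,:\,(X_1,Z_0,Z')\prec(X,Z,Z_0)\}$ and $S_+(X,Z)=\inf\{S(Z'')\,:\,(X,Z,Z_0)\prec(X_1,Z_0,Z'')\}$. Then $S_\pm(X,Z_0)=S_\pm(X)$ for $X\in\Gamma$ and $S_\pm(X_1,Z)=S(Z)$ for $Z\in\Gamma_0$. Moreover, if $\hat S$ is any function on $\Gamma\times\Gamma_0$ that is monotone with respect to $\prec$ (i.e. $A\prec B$ implies $\hat S(A)\le\hat S(B)$) and satisfies $\hat S(X_1,Z)=S(Z)$ for all $Z\in\Gamma_0$, then $S_-(X)\le\hat S(X,Z_0)\le S_+(X)$ for all $X\in\Gamma$.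
   Context: Setting (axiomatic thermodynamics via adiabatic accessibility). States belong to state spaces; for states $X,Y$ (possibly in different spaces) $X\prec Y$ means $Y$ can be reached from $X$ by an adiabatic process; $X\sim_A Y$ means $X\prec Y$ and $Y\prec X$. For state spaces $\Gamma_1,\Gamma_2$ the product $\Gamma_1\times\Gamma_2$ consists of pairs $(X_1,X_2)$; multiple products are formed likewise, and $(X,Y,Z,W)$ denotes a state of a fourfold product. For a scalable space, $\lambda X$ ($\lambda>0$) denotes a scaled state. Assumptions on $\prec$: (A1) Reflexivity: $X\sim_A X$. (A2) Transitivity: $X\prec Y$, $Y\prec Z$ imply $X\prec Z$. (A3) Consistency: $X\prec X'$ and $Y\prec Y'$ imply $(X,Y)\prec(X',Y')$. (A6) Stability with respect to $\Gamma_0$: if $(X,\varepsilon Z_0)\prec(Y,\varepsilon Z_1)$ with $Z_0,Z_1\in\Gamma_0$ for a sequence of $\varepsilon>0$ tending to zero, then $X\prec Y$. Cancellation law: $(X_1,X_2)\prec(X_1,Y_2)$ implies $X_2\prec Y_2$. A normal system $\Gamma_0$ is a state space of equilibrium states on which scaling is defined, equipped with an additive and extensive entropy function $S:\Gamma_0\to\mathbb R$ ($S(\lambda Z)=\lambda S(Z)$, $S$ additive on products of scaled copies) which characterizes $\prec$: for two states in the same product of scaled copies of $\Gamma_0$, one precedes the other iff its entropy is $\le$ that of the other; moreover the range of $S$ is connected (if $S(X)<S(Y)$, every value in $[S(X),S(Y)]$ is attained by $S$ on $\Gamma_0$). Scaling is not assumed to be defined on $\Gamma$. *)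

(* Defs.v *)
From Stdlib Require Import Reals.
From Coquelicot Require Import Coquelicot.
Open Scope R_scope.

(* Compound states: scaled copies  t Z  of states of the normal system Gamma0
   (t > 0), states of Gamma, and (formal) pairs = states of product spaces. *)
Inductive cstate (G0 G : Type) : Type :=
| St0 : posreal -> G0 -> cstate G0 G
| StG : G -> cstate G0 G
| StP : cstate G0 G -> cstate G0 G -> cstate G0 G.
Arguments St0 {G0 G}. Arguments StG {G0 G}. Arguments StP {G0 G}.

Definition one_pos : posreal := mkposreal 1 Rlt_0_1.
Definition g0 {G0 G : Type} (z : G0) : cstate G0 G := St0 one_pos z.

Section Setting.
Context {G0 G : Type}.
Implicit Types (a b c : cstate G0 G).

(* two states lie in the same product of scaled copies of Gamma0 *)
Fixpoint same_prod0 a b : Prop :=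
  match a, b with
  | St0 t _, St0 s _ => pos t = pos s
  | StP a1 a2, StP b1 b2 => same_prod0 a1 b1 /\ same_prod0 a2 b2
  | _, _ => False
  end.

Fixpoint ent0 (S : G0 -> R) a : R :=
  match a with
  | St0 t z => pos t * S z
  | StG _ => 0
  | StP a1 a2 => ent0 S a1 + ent0 S a2
  end.

Variable prec : cstate G0 G -> cstate G0 G -> Prop.

Definition A1_reflexive : Prop := forall a, prec a a.
Definition A2_transitive : Prop := forall a b c, prec a b -> prec b c -> prec a c.
Definition A3_consistent : Prop :=
  forall a a' b b', prec a a' -> prec b b' -> prec (StP a b) (StP a' b').
Definition A6_stable : Prop :=
  forall a b (z0 z1 : G0) (eps : nat -> posreal),
    Un_cv (fun n => pos (eps n)) 0 ->
    (forall n, prec (StP a (St0 (eps n) z0)) (StP b (St0 (eps n) z1))) ->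
    prec a b.
Definition cancellation_law : Prop :=
  forall a b c, prec (StP a b) (StP a c) -> prec b c.
(* standard identification of products: commutativity and associativity
   (Gamma1 x Gamma2 = Gamma2 x Gamma1, (Gamma1 x Gamma2) x Gamma3 = Gamma1 x (Gamma2 x Gamma3)) *)
Definition product_identifications : Prop :=
  (forall a b, prec (StP a b) (StP b a)) /\
  (forall a b c, prec (StP (StP a b) c) (StP a (StP b c))
              /\ prec (StP a (StP b c)) (StP (StP a b) c)).

Definition normal_system (S : G0 -> R) : Prop :=
  (forall a b, same_prod0 a b -> (prec a b <-> ent0 S a <= ent0 S b)) /\
  (forall z1 z2 : G0, S z1 < S z2 ->
     forall s, S z1 <= s <= S z2 -> exists z : G0, S z = s).

Definition B1_condition (Z0 : G0) (X1 : G) : Prop :=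
  forall X : G, exists Z' Z'' : G0,
    prec (StP (StG X1) (g0 Z')) (StP (StG X) (g0 Z0)) /\
    prec (StP (StG X) (g0 Z0)) (StP (StG X1) (g0 Z'')).

Variables (S : G0 -> R) (Z0 : G0) (X1 : G).

Definition Sminus (X : G) : Rbar :=
  Lub_Rbar (fun s => exists Z' : G0, s = S Z' /\
    prec (StP (StG X1) (g0 Z')) (StP (StG X) (g0 Z0))).
Definition Splus (X : G) : Rbar :=
  Glb_Rbar (fun s => exists Z'' : G0, s = S Z'' /\
    prec (StP (StG X) (g0 Z0)) (StP (StG X1) (g0 Z''))).

Definition Sminus2 (X Y : G) : Rbar :=
  Lub_Rbar (fun s => exists Z' W' : G0, s = S Z' + S W' /\
    prec (StP (StP (StG X1) (StG X1)) (StP (g0 Z') (g0 W')))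
         (StP (StP (StG X) (StG Y)) (StP (g0 Z0) (g0 Z0)))).
Definition Splus2 (X Y : G) : Rbar :=
  Glb_Rbar (fun s => exists Z'' W'' : G0, s = S Z'' + S W'' /\
    prec (StP (StP (StG X) (StG Y)) (StP (g0 Z0) (g0 Z0)))
         (StP (StP (StG X1) (StG X1)) (StP (g0 Z'') (g0 W'')))).

Definition SminusG0 (X : G) (Z : G0) : Rbar :=
  Lub_Rbar (fun s => exists Z' : G0, s = S Z' /\
    prec (StP (StP (StG X1) (g0 Z0)) (g0 Z'))
         (StP (StP (StG X) (g0 Z)) (g0 Z0))).
Definition SplusG0 (X : G) (Z : G0) : Rbar :=
  Glb_Rbar (fun s => exists Z'' : G0, s = S Z'' /\
    prec (StP (StP (StG X) (g0 Z)) (g0 Z0))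
         (StP (StP (StG X1) (g0 Z0)) (g0 Z''))).

End Setting.

(* Main.v *)
Require Import Defs.
From Stdlib Require Import Reals.
From Coquelicot Require Import Coquelicot.
From Stdlib Require Import Lra Lia Classical.
Open Scope R_scope.

Lemma cv_inv : Un_cv (fun n => / (INR n + 1)) 0.
Proof.
  intros eps Heps. destruct (archimed_cor1 eps Heps) as [N [HN HN0]].
  exists N. intros n Hn. unfold R_dist. rewrite Rminus_0_r.
  assert (HNpos: 0 < INR N) by (apply lt_0_INR; lia).
  assert (INR N <= INR n) by (apply le_INR; lia).
  rewrite Rabs_pos_eq.
  - apply Rle_lt_trans with (/ INR N); auto. apply Rinv_le_contravar; lra.
  - left; apply Rinv_0_lt_compat; lra.
Qed.

Lemma inv_pos_n (n : nat) : 0 < / (INR n + 1).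
Proof. apply Rinv_0_lt_compat. pose proof (pos_INR n). lra. Qed.

Lemma lub_le (A : R -> Prop) (c : R) :
  (forall x, A x -> x <= c) -> Rbar_le (Lub_Rbar A) c.
Proof. intros H. apply (Lub_Rbar_correct A). intros x Hx. simpl. auto. Qed.

Lemma le_glb (A : R -> Prop) (c : R) :
  (forall x, A x -> c <= x) -> Rbar_le c (Glb_Rbar A).
Proof. intros H. apply (Glb_Rbar_correct A). intros x Hx. simpl. auto. Qed.

Lemma le_lub (A : R -> Prop) x : A x -> Rbar_le x (Lub_Rbar A).
Proof. intros H. apply (Lub_Rbar_correct A). auto. Qed.

Lemma glb_le (A : R -> Prop) x : A x -> Rbar_le (Glb_Rbar A) x.
Proof. intros H. apply (Glb_Rbar_correct A). auto. Qed.

Lemma lub_mono (A B : R -> Prop) : (forall x, A x -> B x) ->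
  Rbar_le (Lub_Rbar A) (Lub_Rbar B).
Proof.
  intros H. apply (Lub_Rbar_correct A). intros x Hx. apply le_lub; auto.
Qed.

Lemma glb_mono (A B : R -> Prop) : (forall x, A x -> B x) ->
  Rbar_le (Glb_Rbar B) (Glb_Rbar A).
Proof.
  intros H. apply (Glb_Rbar_correct A). intros x Hx. apply glb_le; auto.
Qed.

Lemma lub_le_glb (A B : R -> Prop) : (forall x y, A x -> B y -> x <= y) ->
  Rbar_le (Lub_Rbar A) (Glb_Rbar B).
Proof.
  intros H. apply (Glb_Rbar_correct B). intros y Hy. apply lub_le. intros; eauto.
Qed.

Lemma lub_finite (A : R -> Prop) x0 c : A x0 -> (forall x, A x -> x <= c) ->
  exists a, Lub_Rbar A = Finite a /\ a <= c /\ (forall x, A x -> x <= a).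
Proof.
  intros H0 H. pose proof (lub_le A c H) as H1. pose proof (le_lub A x0 H0) as H2.
  destruct (Lub_Rbar A) as [a| |] eqn:E; simpl in *; try contradiction.
  exists a. repeat split; auto. intros x Hx. pose proof (le_lub A x Hx) as H3.
  rewrite E in H3. exact H3.
Qed.

Lemma glb_finite (A : R -> Prop) x0 c : A x0 -> (forall x, A x -> c <= x) ->
  exists a, Glb_Rbar A = Finite a /\ c <= a /\ (forall x, A x -> a <= x).
Proof.
  intros H0 H. pose proof (le_glb A c H) as H1. pose proof (glb_le A x0 H0) as H2.
  destruct (Glb_Rbar A) as [a| |] eqn:E; simpl in *; try contradiction.
  exists a. repeat split; auto. intros x Hx. pose proof (glb_le A x Hx) as H3.
  rewrite E in H3. exact H3.
Qed.

Lemma lub_sum (A B C : R -> Prop) x0 y0 : A x0 -> B y0 ->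
  (forall x y, A x -> B y -> C (x + y)) ->
  Rbar_le (Rbar_plus (Lub_Rbar A) (Lub_Rbar B)) (Lub_Rbar C).
Proof.
  intros HA HB H.
  pose proof (le_lub C _ (H _ _ HA HB)) as HC.
  destruct (Lub_Rbar C) as [c| |] eqn:E.
  - assert (Hxy : forall x y, A x -> B y -> x + y <= c).
    { intros x y Hx Hy. pose proof (le_lub C _ (H _ _ Hx Hy)) as K. rewrite E in K. exact K. }
    destruct (lub_finite A x0 (c - y0) HA) as [a [Ea [_ Ha]]].
    { intros x Hx. specialize (Hxy x y0 Hx HB). lra. }
    assert (Hy : forall y, B y -> y <= c - a).
    { intros y Hy. assert (Rbar_le (Lub_Rbar A) (c - y)).
      { apply lub_le. intros x Hx. specialize (Hxy x y Hx Hy). lra. }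
      rewrite Ea in H0. simpl in H0. lra. }
    destruct (lub_finite B y0 (c - a) HB Hy) as [b [Eb [Hb _]]].
    rewrite Ea, Eb. simpl. lra.
  - destruct (Rbar_plus (Lub_Rbar A) (Lub_Rbar B)); simpl; auto.
  - simpl in HC. contradiction.
Qed.

Lemma glb_sum (A B C : R -> Prop) x0 y0 : A x0 -> B y0 ->
  (forall x y, A x -> B y -> C (x + y)) ->
  Rbar_le (Glb_Rbar C) (Rbar_plus (Glb_Rbar A) (Glb_Rbar B)).
Proof.
  intros HA HB H.
  pose proof (glb_le C _ (H _ _ HA HB)) as HC.
  destruct (Glb_Rbar C) as [c| |] eqn:E.
  - assert (Hxy : forall x y, A x -> B y -> c <= x + y).
    { intros x y Hx Hy. pose proof (glb_le C _ (H _ _ Hx Hy)) as K. rewrite E in K. exact K. }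
    destruct (glb_finite A x0 (c - y0) HA) as [a [Ea [_ Ha]]].
    { intros x Hx. specialize (Hxy x y0 Hx HB). lra. }
    assert (Hy : forall y, B y -> c - a <= y).
    { intros y Hy. assert (Rbar_le (c - y) (Glb_Rbar A)).
      { apply le_glb. intros x Hx. specialize (Hxy x y Hx Hy). lra. }
      rewrite Ea in H0. simpl in H0. lra. }
    destruct (glb_finite B y0 (c - a) HB Hy) as [b [Eb [Hb _]]].
    rewrite Ea, Eb. simpl. lra.
  - simpl in HC. contradiction.
  - destruct (Rbar_plus (Glb_Rbar A) (Glb_Rbar B)); simpl; auto.
Qed.

Section Aux.
Context {G0 G : Type} (prec : cstate G0 G -> cstate G0 G -> Prop)
  (S : G0 -> R)
  (hA1 : A1_reflexive prec) (hA2 : A2_transitive prec)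
  (hA3 : A3_consistent prec) (hA6 : A6_stable prec)
  (hprod : product_identifications prec) (hcanc : cancellation_law prec)
  (hnorm : normal_system prec S).

Lemma congL a a' b : prec a a' -> prec (StP a b) (StP a' b).
Proof. intros; apply hA3; auto. Qed.
Lemma congR a b b' : prec b b' -> prec (StP a b) (StP a b').
Proof. intros; apply hA3; auto. Qed.
Lemma comm a b : prec (StP a b) (StP b a).
Proof. apply hprod. Qed.
Lemma asL a b c : prec (StP (StP a b) c) (StP a (StP b c)).
Proof. apply hprod. Qed.
Lemma asR a b c : prec (StP a (StP b c)) (StP (StP a b) c).
Proof. apply hprod. Qed.

Lemma midswap a b c d : prec (StP (StP a b) (StP c d)) (StP (StP a c) (StP b d)).
Proof.
  eapply hA2. apply asL.
  eapply hA2. apply congR. apply asR.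
  eapply hA2. apply congR. apply congL. apply comm.
  eapply hA2. apply congR. apply asL.
  apply asR.
Qed.

Lemma g0_le z z' : S z <= S z' -> prec (g0 z) (g0 z').
Proof. intros H. apply (proj1 hnorm); simpl; auto. lra. Qed.

Lemma g0_le_inv z z' w w' : prec (StP (g0 z) (g0 w)) (StP (g0 z') (g0 w')) ->
  S z + S w <= S z' + S w'.
Proof. intros H. pose proof (proj1 (proj1 hnorm (StP (g0 z) (g0 w)) (StP (g0 z') (g0 w')) (conj eq_refl eq_refl)) H) as K.
  simpl in K. lra. Qed.

Lemma g0_le2 z z' w w' : S z + S w <= S z' + S w' ->
  prec (StP (g0 z) (g0 w)) (StP (g0 z') (g0 w')).
Proof. intros H. apply (proj1 hnorm). { simpl. split; reflexivity. } simpl. lra. Qed.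

Lemma rearr a b c a' b' :
  prec (StP (StP a c) b) (StP (StP a' c) b') <-> prec (StP a b) (StP a' b').
Proof.
  assert (R1 : forall a b c, prec (StP (StP a c) b) (StP c (StP a b))).
  { intros. eapply hA2. apply asL. eapply hA2. apply congR. apply comm.
    eapply hA2. apply asR. apply comm. }
  assert (R2 : forall a b c, prec (StP c (StP a b)) (StP (StP a c) b)).
  { intros. eapply hA2. apply comm. eapply hA2. apply asL.
    eapply hA2. apply congR. apply comm. apply asR. }
  split; intros H.
  - apply (hcanc c). eapply hA2. apply R2. eapply hA2. exact H. apply R1.
  - eapply hA2. apply R1. eapply hA2. apply congR. exact H. apply R2.
Qed.

Lemma a6_lemma A B U :
  (forall d, 0 < d -> exists z'' z', prec A (StP U (g0 z'')) /\
     prec (StP U (g0 z')) B /\ S z'' <= S z' + d) -> prec A B.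
Proof.
  intros H.
  destruct (classic (exists w0 w1, S w0 < S w1)) as [[w0 [w1 Hw]] | Hno].
  - set (eps := fun n : nat => mkposreal _ (inv_pos_n n)).
    apply (hA6 A B w0 w1 eps). { apply cv_inv. }
    intros n. set (e := eps n).
    assert (He : 0 < pos e) by apply cond_pos.
    destruct (H (pos e * (S w1 - S w0))) as [z'' [z' [H1 [H2 H3]]]].
    { apply Rmult_lt_0_compat; lra. }
    eapply hA2. apply congL. apply H1.
    eapply hA2. apply asL.
    apply (hA2 _ (StP U (StP (g0 z') (St0 e w1)))).
    { apply congR. apply (proj1 hnorm). { simpl. split; reflexivity. }
      unfold e, eps in *. simpl in *. nra. }
    eapply hA2. apply asR.
    apply congL. exact H2.
  - destruct (H 1 Rlt_0_1) as [z'' [z' [H1 [H2 H3]]]].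
    eapply hA2. apply H1. eapply hA2. 2: apply H2.
    apply congR. apply g0_le.
    destruct (Rle_or_lt (S z'') (S z')) as [h|h]; auto.
    exfalso; apply Hno; eauto.
Qed.
End Aux.

Theorem proposition1 (G0 G : Type) (prec : cstate G0 G -> cstate G0 G -> Prop)
  (S : G0 -> R) (Z0 : G0) (X1 : G)
  (hA1 : A1_reflexive prec) (hA2 : A2_transitive prec)
  (hA3 : A3_consistent prec) (hA6 : A6_stable prec)
  (hcanc : cancellation_law prec) (hprod : product_identifications prec)
  (hnorm : normal_system prec S) (hB1 : B1_condition prec Z0 X1) :
  (* (1) *)
  (forall X Y : G, prec (StG X) (StG Y) ->
     Rbar_le (Sminus prec S Z0 X1 X) (Sminus prec S Z0 X1 Y) /\
     Rbar_le (Splus prec S Z0 X1 X) (Splus prec S Z0 X1 Y)) /\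
  (* (2) *)
  (forall X Y : G, Rbar_le (Splus prec S Z0 X1 X) (Sminus prec S Z0 X1 Y) ->
     prec (StG X) (StG Y)) /\
  (* (3) *)
  (forall X Y : G,
     Rbar_le (Rbar_plus (Sminus prec S Z0 X1 X) (Sminus prec S Z0 X1 Y))
             (Sminus2 prec S Z0 X1 X Y) /\
     Rbar_le (Sminus2 prec S Z0 X1 X Y) (Splus2 prec S Z0 X1 X Y) /\
     Rbar_le (Splus2 prec S Z0 X1 X Y)
             (Rbar_plus (Splus prec S Z0 X1 X) (Splus prec S Z0 X1 Y))) /\
  (* (4) *)
  ((forall X : G, SminusG0 prec S Z0 X1 X Z0 = Sminus prec S Z0 X1 X /\
                  SplusG0 prec S Z0 X1 X Z0 = Splus prec S Z0 X1 X) /\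
   (forall Z : G0, SminusG0 prec S Z0 X1 X1 Z = Finite (S Z) /\
                   SplusG0 prec S Z0 X1 X1 Z = Finite (S Z)) /\
   (forall Shat : G -> G0 -> R,
      (forall (X Y : G) (Z W : G0),
         prec (StP (StG X) (g0 Z)) (StP (StG Y) (g0 W)) -> Shat X Z <= Shat Y W) ->
      (forall Z : G0, Shat X1 Z = S Z) ->
      forall X : G,
        Rbar_le (Sminus prec S Z0 X1 X) (Finite (Shat X Z0)) /\
        Rbar_le (Finite (Shat X Z0)) (Splus prec S Z0 X1 X))).
Proof.
  pose proof (congL prec hA1 hA3) as cL.
  pose proof (congR prec hA1 hA3) as cR.
  pose proof (comm prec hprod) as cm.
  pose proof (asL prec hprod) as aL.
  pose proof (asR prec hprod) as aR.
  pose proof (midswap prec hA1 hA2 hA3 hprod) as ms.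
  pose proof (rearr prec hA1 hA2 hA3 hprod hcanc) as rr.
  pose proof (a6_lemma prec S hA1 hA2 hA3 hA6 hprod hnorm) as a6.
  split; [|split; [|split]].
  -
    intros X Y H. split.
    + unfold Sminus. apply lub_mono. intros s [Z' [-> HZ]]. exists Z'. split; auto.
      eapply hA2. exact HZ. apply cL. exact H.
    + unfold Splus. apply glb_mono. intros s [Z'' [-> HZ]]. exists Z''. split; auto.
      eapply hA2. 2: exact HZ. apply cL. exact H.
  -
    intros X Y H.
    assert (key : prec (StP (StG X) (g0 Z0)) (StP (StG Y) (g0 Z0))).
    { apply (a6 _ _ (StG X1)). intros d Hd. apply NNPP. intro Hn.
      destruct (hB1 X) as [_ [zx [_ HX]]]. destruct (hB1 Y) as [zy [_ [HY _]]].
      assert (Hlt : forall z'' z', prec (StP (StG X) (g0 Z0)) (StP (StG X1) (g0 z'')) ->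
                 prec (StP (StG X1) (g0 z')) (StP (StG Y) (g0 Z0)) -> S z' + d < S z'').
      { intros z'' z' h1 h2. destruct (Rle_or_lt (S z'') (S z' + d)) as [h|h].
        - exfalso; apply Hn; eauto.
        - lra. }
      unfold Splus, Sminus in H.
      match type of H with Rbar_le (Glb_Rbar ?A) (Lub_Rbar ?B) =>
        set (SA := A) in H; set (SB := B) in H end.
      destruct (lub_finite SB (S zy) (S zx - d)) as [m [Em [_ Hm]]].
      { exists zy; split; auto. }
      { intros y [z' [-> hz']]. specialize (Hlt zx z' HX hz'). lra. }
      assert (H0 : Rbar_le (m + d) (Glb_Rbar SA)).
      { apply le_glb. intros x [z'' [-> hz'']].
        assert (H1 : Rbar_le (Lub_Rbar SB) (S z'' - d)).
        { apply lub_le. intros y [z' [-> hz']]. specialize (Hlt z'' z' hz'' hz'). lra. }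
        rewrite Em in H1; simpl in H1; lra. }
      pose proof (Rbar_le_trans _ _ _ H0 H) as H1. rewrite Em in H1. simpl in H1. lra. }
    apply (hcanc (g0 Z0)). eapply hA2. apply cm. eapply hA2. exact key. apply cm.
  -
    intros X Y. split; [|split].
    + destruct (hB1 X) as [zx [_ [hx _]]]. destruct (hB1 Y) as [zy [_ [hy _]]].
      unfold Sminus, Sminus2. eapply lub_sum.
      * exists zx; split; [reflexivity | exact hx].
      * exists zy; split; [reflexivity | exact hy].
      * intros x y [z' [-> h1]] [w' [-> h2]]. exists z', w'. split; auto.
        eapply hA2. apply ms. eapply hA2. apply hA3; [exact h1 | exact h2]. apply ms.
    + unfold Sminus2, Splus2. apply lub_le_glb.
      intros x y [z' [w' [-> h1]]] [z'' [w'' [-> h2]]].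
      apply (g0_le_inv prec S hnorm). apply (hcanc (StP (StG X1) (StG X1))).
      eapply hA2; eauto.
    + destruct (hB1 X) as [_ [zx [_ hx]]]. destruct (hB1 Y) as [_ [zy [_ hy]]].
      unfold Splus, Splus2. eapply glb_sum.
      * exists zx; split; [reflexivity | exact hx].
      * exists zy; split; [reflexivity | exact hy].
      * intros x y [z' [-> h1]] [w' [-> h2]]. exists z', w'. split; auto.
        eapply hA2. apply ms. eapply hA2. apply hA3; [exact h1 | exact h2]. apply ms.
  -
    split; [|split].
    + intros X. unfold SminusG0, Sminus, SplusG0, Splus. split.
      * apply Lub_Rbar_eqset. intros x; split; intros [z [-> h]]; exists z; split; auto;
          first [exact (proj1 (rr _ _ _ _ _) h) | exact (proj2 (rr _ _ _ _ _) h)].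
      * apply Glb_Rbar_eqset. intros x; split; intros [z [-> h]]; exists z; split; auto;
          first [exact (proj1 (rr _ _ _ _ _) h) | exact (proj2 (rr _ _ _ _ _) h)].
    + intros Z.
      assert (E1 : forall z', prec (StP (StP (StG X1) (g0 Z0)) (g0 z'))
                                 (StP (StP (StG X1) (g0 Z)) (g0 Z0)) <-> S z' <= S Z).
      { intros z'. split; intros h.
        - assert (K : prec (StP (g0 Z0) (g0 z')) (StP (g0 Z) (g0 Z0))).
          { apply (hcanc (StG X1)). eapply hA2. apply aR. eapply hA2. exact h. apply aL. }
          apply (g0_le_inv prec S hnorm) in K. lra.
        - eapply hA2. apply aL. eapply hA2. apply cR.
          apply (g0_le2 prec S hnorm Z0 Z z' Z0). lra. apply aR. }
      assert (E2 : forall z', prec (StP (StP (StG X1) (g0 Z)) (g0 Z0))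
                                 (StP (StP (StG X1) (g0 Z0)) (g0 z')) <-> S Z <= S z').
      { intros z'. split; intros h.
        - assert (K : prec (StP (g0 Z) (g0 Z0)) (StP (g0 Z0) (g0 z'))).
          { apply (hcanc (StG X1)). eapply hA2. apply aR. eapply hA2. exact h. apply aL. }
          apply (g0_le_inv prec S hnorm) in K. lra.
        - eapply hA2. apply aL. eapply hA2. apply cR.
          apply (g0_le2 prec S hnorm Z Z0 Z0 z'). lra. apply aR. }
      unfold SminusG0, SplusG0. split.
      * apply is_lub_Rbar_unique. split.
        -- intros x [z' [-> h]]. simpl. apply E1. exact h.
        -- intros b Hb. apply Hb. exists Z. split; auto. apply E1. lra.
      * apply is_glb_Rbar_unique. split.
        -- intros x [z' [-> h]]. simpl. apply E2. exact h.
        -- intros b Hb. apply Hb. exists Z. split; auto. apply E2. lra.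
    + intros Shat Hmon HX1 X. split.
      * unfold Sminus. apply lub_le. intros x [z' [-> h]]. rewrite <- HX1. apply Hmon. exact h.
      * unfold Splus. apply le_glb. intros x [z'' [-> h]]. rewrite <- HX1. apply Hmon. exact h.
Qed.
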